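(* Let $p\geq1$, $\mu>0$, and let $g:\mathbb{R}^n\to\mathbb{R}\cup\{+\infty\}$ be convex. Let $\lambda^{\ast}$ be the optimal solution of $$\min_{\lambda\in\mathbb{R}^n}\Big\{g(\lambda)+\frac{\mu}{1+\frac1p}\lVert\lambda\rVert^{1+\frac1p}\Big\},$$ and suppose $\lambda^{\ast}\neq0$. Let $\lambda^0\in\mathbb{R}^n$ and generate $\lambda^1,\dots,\lambda^N$ by: $t^k=\lVert\lambda^k\rVert^{\frac1p-1}$ if $\lambda^k\neq0$, $t^k=0$ otherwise, and $\lambda^{k+1}=\arg\min_{\lambda\in\mathbb{R}^n}\{g(\lambda)+\frac{\mu}{2}t^k\lVert\lambda\rVert^2\}$. Suppose $\lVert\lambda^0\rVert\geq\lVert\lambda^{\ast}\rVert$ and $\lambda^k\neq\lambda^{\ast}$ for $k=1,2,\dots,N$. Then $$\lVert\lambda^N-\lambda^{\ast}\rVert\leq\lVert\lambda^{\ast}\rVert\Big(e^{(1-\frac1p)^{N-1}\ln\frac{\lVert\lambda^0\rVert}{\lVert\lambda^{\ast}\rVert}}-1\Big)\leq\big(\lVert\lambda^0\rVert-\lVert\lambda^{\ast}\rVert\big)\Big(1-\frac1p\Big)^{N-1}.$$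
   Context: $\lVert\cdot\rVert$ is the Euclidean norm. The minimizers in the iteration are assumed to exist. *)

(* Defs.v *)
From HB Require Import structures.
From mathcomp Require Import all_boot all_order all_algebra.
From mathcomp Require Import all_classical all_reals all_analysis.
Set Implicit Arguments. Unset Strict Implicit. Unset Printing Implicit Defensive.
Import Order.TTheory GRing.Theory Num.Theory.
Local Open Scope ring_scope.
Local Open Scope ereal_scope.
Local Open Scope ring_scope.

Definition enorm (R : realType) (n : nat) (x : 'rV[R]_n) : R :=
  Num.sqrt (\sum_(i < n) x ord0 i ^+ 2).

(* Convexity of an extended-valued function g : R^n -> R \cup {+oo}
   (the codomain restriction "never -oo" is a separate hypothesis). *)
Definition econvex (R : realType) (n : nat) (g : 'rV[R]_n -> \bar R) : Prop :=
  forall (x y : 'rV[R]_n) (t : R), 0 < t < 1 ->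
    (g (t *: x + (1 - t) *: y)%R <= (t%:E * g x + (1 - t)%:E * g y)%E)%E.

Definition is_argmin (R : realType) (n : nat) (f : 'rV[R]_n -> \bar R) (x : 'rV[R]_n) : Prop :=
  forall y, (f x <= f y)%E.

(* Main.v *)
Require Import Defs.
From HB Require Import structures.
From mathcomp Require Import all_boot all_order all_algebra.
From mathcomp Require Import all_classical all_reals all_analysis.
From mathcomp Require Import ring lra.
Set Implicit Arguments. Unset Strict Implicit.
Import Order.TTheory GRing.Theory Num.Theory.
Local Open Scope ring_scope.

Section R1.
Variable R : realType.
Lemma expR_cvx (th U V : R) : 0 <= th <= 1 ->
  expR (th * U + (1 - th) * V) <= th * expR U + (1 - th) * expR V.
Proof.
move=> /andP[h0 h1]; set m := th * U + (1 - th) * V.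
have eU : expR U = expR m * expR (U - m) by rewrite -expRD addrC subrK.
have eV : expR V = expR m * expR (V - m) by rewrite -expRD addrC subrK.
have := expR_ge1Dx (U - m); have := expR_ge1Dx (V - m).
have := expR_gt0 m; rewrite eU eV => hm hV hU.
have h1' : 0 <= 1 - th by lra.
have A : th * (expR m * (1 + (U - m))) <= th * (expR m * expR (U - m)).
  by rewrite ler_wpM2l // ler_wpM2l // ltW.
have B : (1 - th) * (expR m * (1 + (V - m))) <= (1 - th) * (expR m * expR (V - m)).
  by rewrite ler_wpM2l // ler_wpM2l // ltW.
have E : th * (expR m * (1 + (U - m))) + (1 - th) * (expR m * (1 + (V - m))) = expR m.
  by rewrite /m; ring.
by rewrite -{1}E; apply: lerD.
Qed.

Lemma small_lim (A B C : R) : 0 <= C -> (forall s, 0 < s < 1 -> A <= B + s * C) -> A <= B.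
Proof.
move=> C0 H; rewrite leNgt; apply/negP => AB.
have d0 : 0 < A - B by lra.
set s := (A - B) / (A - B + C + 1).
have hden : 0 < A - B + C + 1 by lra.
have s0 : 0 < s by rewrite divr_gt0.
have s1 : s < 1 by rewrite ltr_pdivrMr // mul1r; lra.
have := H s; rewrite s0 s1 => /(_ isT) HH.
have : s * C < A - B.
  rewrite /s mulrAC ltr_pdivrMr //.
  have : 0 <= (A - B) * C by rewrite mulr_ge0 // ltW.
  nra.
lra.
Qed.
End R1.

Section S.
Variables (R : realType) (n : nat).
Implicit Types x y z : 'rV[R]_n.

Definition dot x y : R := \sum_(i < n) x ord0 i * y ord0 i.

Lemma dotC x y : dot x y = dot y x.
Proof. by apply: eq_bigr => i _; rewrite mulrC. Qed.

Lemma dotDl x y z : dot (x + y) z = dot x z + dot y z.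
Proof. by rewrite /dot -big_split; apply: eq_bigr => i _; rewrite !mxE mulrDl. Qed.

Lemma dotZl (a : R) x y : dot (a *: x) y = a * dot x y.
Proof. by rewrite /dot mulr_sumr; apply: eq_bigr => i _; rewrite !mxE mulrA. Qed.

Lemma dotNl x y : dot (- x) y = - dot x y.
Proof. by rewrite -scaleN1r dotZl mulN1r. Qed.

Lemma dotBl x y z : dot (x - y) z = dot x z - dot y z.
Proof. by rewrite dotDl dotNl. Qed.

Lemma dotDr x y z : dot z (x + y) = dot z x + dot z y.
Proof. by rewrite dotC dotDl !(dotC z). Qed.
Lemma dotZr (a : R) x y : dot y (a *: x) = a * dot y x.
Proof. by rewrite dotC dotZl dotC. Qed.
Lemma dotBr x y z : dot z (x - y) = dot z x - dot z y.
Proof. by rewrite dotC dotBl !(dotC z). Qed.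

Lemma dot_ge0 x : 0 <= dot x x.
Proof. by apply: sumr_ge0 => i _; rewrite -expr2 sqr_ge0. Qed.

Lemma dot0 x : dot x x = 0 -> x = 0.
Proof.
move=> /eqP; rewrite psumr_eq0 => [/allP H|i _]; last by rewrite -expr2 sqr_ge0.
apply/rowP => i; rewrite mxE; have := H i (mem_index_enum _).
by rewrite /= mulf_eq0 orbb => /eqP.
Qed.

Definition nrm x := Num.sqrt (dot x x).

Lemma nrm_ge0 x : 0 <= nrm x. Proof. exact: sqrtr_ge0. Qed.
Lemma nrm_sq x : nrm x ^+ 2 = dot x x.
Proof. by rewrite sqr_sqrtr // dot_ge0. Qed.

Lemma CS x y : dot x y <= nrm x * nrm y.
Proof.
have [a0|apos] := eqVneq (nrm x) 0.
  have : dot x x = 0 by rewrite -nrm_sq a0 expr0n.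
  by move/dot0 => ->; rewrite /dot big1 ?mulr_ge0 ?nrm_ge0 // => i _; rewrite mxE mul0r.
have [b0|bpos] := eqVneq (nrm y) 0.
  have : dot y y = 0 by rewrite -nrm_sq b0 expr0n.
  by move/dot0 => ->; rewrite /dot big1 ?mulr_ge0 ?nrm_ge0 // => i _; rewrite mxE mulr0.
set a := nrm x in apos *; set b := nrm y in bpos *.
have ha : 0 < a by rewrite lt0r apos nrm_ge0.
have hb : 0 < b by rewrite lt0r bpos nrm_ge0.
have := dot_ge0 (b *: x - a *: y).
rewrite dotBl !dotBr !dotZl !dotZr -!nrm_sq (dotC y x) -/a -/b => H.
have : 2 * a * b * dot x y <= 2 * a * b * (a * b) by nra.
by rewrite ler_pM2l // !mulr_gt0.
Qed.

Lemma dot_cmb (s : R) x y : dot (s *: y + (1 - s) *: x) (s *: y + (1 - s) *: x) =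
  s ^+ 2 * dot y y + 2 * s * (1 - s) * dot x y + (1 - s) ^+ 2 * dot x x.
Proof. rewrite !dotDl !dotDr !dotZl !dotZr (dotC y x); ring. Qed.

Variable g : 'rV[R]_n -> \bar R.
Hypothesis Hg : forall x, g x != -oo%E.
Definition dom x := g x != +oo%E.
Definition G x := fine (g x).

Lemma gE x : dom x -> g x = (G x)%:E.
Proof. by move=> d; rewrite /G fineK // fin_numE Hg. Qed.

Lemma argmin_dom (F : 'rV[R]_n -> R) x y0 :
  (forall y, (g x + (F x)%:E <= g y + (F y)%:E)%E) -> dom y0 -> dom x.
Proof.
move=> H d0; apply/negP => /eqP gx; have := H y0; rewrite gx (gE d0) /=.
by rewrite -EFinD leye_eq.
Qed.

Lemma argmin_real (F : 'rV[R]_n -> R) x :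
  (forall y, (g x + (F x)%:E <= g y + (F y)%:E)%E) -> dom x ->
  forall y, dom y -> G x + F x <= G y + F y.
Proof.
by move=> H dx y dy; have := H y; rewrite (gE dx) (gE dy) -!EFinD lee_fin.
Qed.

Definition econv := forall (x y : 'rV[R]_n) (t : R), 0 < t < 1 ->
    (g (t *: x + (1 - t) *: y)%R <= (t%:E * g x + (1 - t)%:E * g y)%E)%E.

Lemma conv_real (Hc : econv) x y t : dom x -> dom y -> 0 < t < 1 ->
  dom (t *: x + (1 - t) *: y) /\ G (t *: x + (1 - t) *: y) <= t * G x + (1 - t) * G y.
Proof.
move=> dx dy ht; have := Hc x y t ht; rewrite (gE dx) (gE dy) -!EFinM -EFinD => H.
have dz : dom (t *: x + (1 - t) *: y).
  by apply/negP => /eqP E; move: H; rewrite E leye_eq.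
by split => //; move: H; rewrite (gE dz) lee_fin.
Qed.

Lemma FO (Hc : econv) (k : R) x : 0 <= k -> dom x ->
  (forall y, dom y -> G x + k / 2 * dot x x <= G y + k / 2 * dot y y) ->
  forall y, dom y -> G x - G y <= k * (dot x y - dot x x).
Proof.
move=> k0 dx Hx y dy.
apply: (@small_lim _ _ _ (k / 2 * (dot y y - 2 * dot x y + dot x x))).
  apply: mulr_ge0; first by rewrite divr_ge0.
  have := dot_ge0 (y - x); rewrite !dotBl !dotBr (dotC y x); lra.
move=> s hs; have [dz Gz] := conv_real Hc dy dx hs.
have := Hx _ dz; rewrite dot_cmb => H.
have s0 : 0 < s by case/andP: hs.
rewrite -(ler_pM2l s0); nra.
Qed.
End S.

Section R2.
Variable R : realType.
Lemma cons_real (a b t1 t2 d : R) : 0 <= a -> 0 < b -> 0 < t1 -> t1 <= t2 ->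
  t1 * a ^+ 2 + t2 * b ^+ 2 <= (t1 + t2) * d -> d <= a * b ->
  b <= a /\ t1 * a <= t2 * b.
Proof.
move=> a0 b0 t10 t12 H dab.
have H2 : (a - b) * (t1 * a - t2 * b) <= 0.
  have : (t1 + t2) * d <= (t1 + t2) * (a * b) by rewrite ler_wpM2l // ; lra.
  move=> H3; have -> : (a - b) * (t1 * a - t2 * b) = t1 * a ^+ 2 + t2 * b ^+ 2 - (t1 + t2) * (a * b) by ring.
  lra.
have ba : b <= a.
  rewrite leNgt; apply/negP => ab.
  have : t1 * a - t2 * b < 0.
    have : t1 * a <= t2 * a by rewrite ler_wpM2r.
    have : t2 * a < t2 * b by rewrite ltr_pM2l //; lra.
    lra.
  move=> hn; have : 0 < (a - b) * (t1 * a - t2 * b) by rewrite nmulr_rgt0 // subr_lt0.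
  lra.
split => //.
have [eab|ab] := eqVneq a b.
  by rewrite eab ler_wpM2r //; lra.
have ab' : 0 < a - b by rewrite subr_gt0 lt_neqAle eq_sym ab ba.
rewrite -subr_le0; move: H2; rewrite pmulr_rle0 //.
Qed.

Lemma dist_real (D a b t1 t2 : R) : 0 <= D -> 0 <= a -> 0 < t1 -> t1 <= t2 ->
  t2 * D ^+ 2 <= (t2 - t1) * a * D -> t1 * a <= t2 * b -> D <= b * (t2 / t1 - 1).
Proof.
move=> D0 a0 t10 t12 H1 H2.
have t20 : 0 < t2 by lra.
have H3 : t2 * D <= (t2 - t1) * a.
  have [->|Dn] := eqVneq D 0; first by rewrite mulr0 mulr_ge0 //; lra.
  have Dp : 0 < D by rewrite lt0r Dn.
  by rewrite -(ler_pM2r Dp) -mulrA -expr2.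
have H4 : t1 * (t2 * D) <= t2 * ((t2 - t1) * b).
  apply: (le_trans (y := t1 * ((t2 - t1) * a))); first by rewrite ler_wpM2l //; lra.
  have -> : t1 * ((t2 - t1) * a) = (t2 - t1) * (t1 * a) by ring.
  have -> : t2 * ((t2 - t1) * b) = (t2 - t1) * (t2 * b) by ring.
  by rewrite ler_wpM2l //; lra.
have -> : b * (t2 / t1 - 1) = ((t2 - t1) * b) / t1 by field; lra.
rewrite ler_pdivlMr //.
rewrite -(ler_pM2l t20); move: H4; rewrite mulrCA; lra.
Qed.
End R2.

Section R3.
Variable R : realType.
Lemma powRpE (a x : R) : 0 < a -> a `^ x = expR (x * ln a).
Proof. by move=> a0; rewrite /powR gt_eqF. Qed.

Lemma sqr_expln (a : R) : 0 < a -> a ^+ 2 = expR (2 * ln a).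
Proof. by move=> a0; rewrite expRM_natl lnK. Qed.

Lemma pow_ineq (r b p mu : R) : 0 < r -> 0 <= b -> 1 <= p -> 0 < mu ->
  mu / (1 + p^-1) * b `^ (1 + p^-1) - mu / 2 * r `^ (p^-1 - 1) * b ^+ 2
  <= mu / (1 + p^-1) * r `^ (1 + p^-1) - mu / 2 * r `^ (p^-1 - 1) * r ^+ 2.
Proof.
move=> r0 b0 p1 mu0.
set e := p^-1.
have e0 : 0 < e by rewrite invr_gt0; lra.
have e1 : e <= 1 by rewrite invf_le1 //; lra.
set q := 1 + e.
have q0 : 0 < q by rewrite /q; lra.
set c := mu / q.
have c0 : 0 < c by rewrite divr_gt0.
set T := r `^ (e - 1).
set P := r `^ q.
have PE : P = T * r ^+ 2.
  by rewrite /P /T !powRpE // sqr_expln // -expRD; congr expR; rewrite /q; ring.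
have cth : c * (q / 2) = mu / 2 by rewrite /c; field; lra.
have T0 : 0 < T by rewrite powR_gt0.
have hP : mu / 2 * P <= c * P.
  rewrite ler_pM2r; last by rewrite PE mulr_gt0 // exprn_gt0.
  rewrite /c ler_pdivlMr // mulrAC ler_pdivrMr // ler_pM2l // /q; lra.
have [->|bn] := eqVneq b 0.
  rewrite powR0; last by rewrite /q; apply/eqP; lra.
  rewrite expr0n /= !mulr0 subr0 -mulrA -PE; lra.
have bp : 0 < b by rewrite lt0r bn.
have HB : b `^ q <= q / 2 * (T * b ^+ 2) + (1 - q / 2) * P.
  have -> : T * b ^+ 2 = expR ((e - 1) * ln r + 2 * ln b).
    by rewrite /T powRpE // sqr_expln // expRD.
  rewrite /P !powRpE //.
  have -> : q * ln b = q / 2 * ((e - 1) * ln r + 2 * ln b) + (1 - q / 2) * (q * ln r).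
    by rewrite /q; field.
  by apply: expR_cvx; apply/andP; split; rewrite /q; lra.
have : c * b `^ q <= c * (q / 2 * (T * b ^+ 2) + (1 - q / 2) * P) by rewrite ler_pM2l.
have E1 : c * (q / 2 * (T * b ^+ 2) + (1 - q / 2) * P) = mu / 2 * T * b ^+ 2 + (c * P - mu / 2 * P).
  rewrite /c /q; field; rewrite -/q; apply/eqP; lra.
rewrite E1 => H.
have -> : mu / 2 * T * r ^+ 2 = mu / 2 * P by rewrite PE; ring.
lra.
Qed.
End R3.

Unset Implicit Arguments.

Theorem theorem4p6 (R : realType) (n : nat) (p mu : R)
  (g : 'rV[R]_n -> \bar R) (lamstar : 'rV[R]_n) (lam : nat -> 'rV[R]_n) (N : nat) :
  1 <= p -> 0 < mu ->
  (forall x, g x != -oo%E) -> econvex g ->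
  (* lamstar is the (unique) optimal solution of the power-regularized problem *)
  is_argmin (fun l => (g l + (mu / (1 + p^-1) * enorm l `^ (1 + p^-1))%:E)%E) lamstar ->
  (forall l, is_argmin (fun l => (g l + (mu / (1 + p^-1) * enorm l `^ (1 + p^-1))%:E)%E) l ->
     l = lamstar) ->
  lamstar != 0 ->
  (* the iteration *)
  (forall k, (k < N)%N ->
     let t := if lam k != 0 then enorm (lam k) `^ (p^-1 - 1) else 0 in
     is_argmin (fun l => (g l + (mu / 2 * t * enorm l ^+ 2)%:E)%E) (lam k.+1)) ->
  (1 <= N)%N ->
  enorm lamstar <= enorm (lam 0%N) ->
  (forall k, (1 <= k <= N)%N -> lam k != lamstar) ->
  enorm (lam N - lamstar)
    <= enorm lamstar *
       (expR ((1 - p^-1) ^+ (N.-1) * ln (enorm (lam 0%N) / enorm lamstar)) - 1)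
  /\ enorm lamstar *
       (expR ((1 - p^-1) ^+ (N.-1) * ln (enorm (lam 0%N) / enorm lamstar)) - 1)
     <= (enorm (lam 0%N) - enorm lamstar) * (1 - p^-1) ^+ (N.-1).
Proof.
move=> p1 mu0 Hg Hc Hstar Huniq ls0 Hit N1 r0le _.
have enE : forall l : 'rV[R]_n, enorm l = nrm l.
  move=> l; rewrite /enorm /nrm /dot; apply: congr1; apply: eq_bigr => i _; by rewrite expr2.
have nrm0 : forall l : 'rV[R]_n, nrm l = 0 -> l = 0.
  by move=> l hl; apply: dot0; rewrite -nrm_sq hl expr0n.
have nrm00 : nrm (0 : 'rV[R]_n) = 0.
  by rewrite /nrm /dot big1 ?sqrtr0 // => i _; rewrite mxE mul0r.
have e0 : 0 < p^-1 by rewrite invr_gt0; lra.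
have e1 : p^-1 <= 1 by rewrite invf_le1 //; lra.
set r := nrm lamstar.
have r0 : 0 < r.
  rewrite lt0r nrm_ge0 andbT; apply/eqP => /nrm0 h; by rewrite h eqxx in ls0.
have [y0 dy0] : exists y0, dom g y0.
  case: (pselect (exists y0, dom g y0)) => // Hn; exfalso.
  have gy : forall z, g z = +oo%E.
    by move=> z; apply/eqP; apply/negPn/negP => dz; apply: Hn; exists z.
  have : (0 : 'rV[R]_n) = lamstar.
    by apply: Huniq => y; rewrite !gy !addye.
  by move=> h; rewrite -h eqxx in ls0.
have dls : dom g lamstar by apply: (argmin_dom Hg Hstar dy0).
set Ts := r `^ (p^-1 - 1).
have Ts0 : 0 < Ts by rewrite powR_gt0.
have TsE : Ts = expR ((p^-1 - 1) * ln r) by rewrite /Ts powRpE.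
have Qls : forall y, dom g y -> G g lamstar + mu * Ts / 2 * dot lamstar lamstar
                     <= G g y + mu * Ts / 2 * dot y y.
  move=> y dy; have := argmin_real Hg Hstar dls dy; rewrite !enE => H.
  have := pow_ineq r0 (nrm_ge0 y) p1 mu0.
  rewrite -!nrm_sq -/r -/Ts.
  have -> : mu * Ts / 2 * r ^+ 2 = mu / 2 * Ts * r ^+ 2 by ring.
  have -> : mu * Ts / 2 * nrm y ^+ 2 = mu / 2 * Ts * nrm y ^+ 2 by ring.
  lra.
have FOls := FO Hg Hc (ltW (mulr_gt0 mu0 Ts0)) dls Qls.
have step : forall k, (k < N)%N -> r <= nrm (lam k) ->
  [/\ r <= nrm (lam k.+1),
      expR ((p^-1 - 1) * ln (nrm (lam k))) * nrm (lam k.+1) <= Ts * r,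
      nrm (lam k.+1 - lamstar) <= r * (Ts / expR ((p^-1 - 1) * ln (nrm (lam k))) - 1)
    & expR ((p^-1 - 1) * ln (nrm (lam k))) <= Ts].
  move=> k hk hr.
  set rk := nrm (lam k).
  have rk0 : 0 < rk by apply: lt_le_trans hr.
  have lk0 : lam k != 0 by apply/eqP => h; move: rk0; rewrite /rk h nrm00 ltxx.
  set t := expR ((p^-1 - 1) * ln rk).
  have t0 : 0 < t by apply: expR_gt0.
  have H := Hit k hk; cbv zeta in H; rewrite lk0 /= in H.
  rewrite enE powRpE // -/rk -/t in H.
  set x1 := lam k.+1.
  have dx1 : dom g x1 by apply: (argmin_dom Hg H dy0).
  have Qx1 : forall y, dom g y -> G g x1 + mu * t / 2 * dot x1 x1
                     <= G g y + mu * t / 2 * dot y y.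
    move=> y dy; have := argmin_real Hg H dx1 dy; rewrite !enE !nrm_sq.
    have -> : mu * t / 2 * dot x1 x1 = mu / 2 * t * dot x1 x1 by ring.
    have -> : mu * t / 2 * dot y y = mu / 2 * t * dot y y by ring.
    by [].
  have FOx1 := FO Hg Hc (ltW (mulr_gt0 mu0 t0)) dx1 Qx1.
  have A1 := FOx1 _ dls.
  have A2 := FOls _ dx1.
  have tTs : t <= Ts.
    rewrite TsE /t ler_expR; apply: ler_wnM2l; first lra.
    by rewrite ler_ln ?posrE.
  have Key : t * dot x1 x1 + Ts * dot lamstar lamstar <= (t + Ts) * dot x1 lamstar.
    rewrite (dotC lamstar x1) in A2.
    have : 0 <= mu * (t * (dot x1 lamstar - dot x1 x1) + Ts * (dot x1 lamstar - dot lamstar lamstar)).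
      have -> : mu * (t * (dot x1 lamstar - dot x1 x1) + Ts * (dot x1 lamstar - dot lamstar lamstar))
         = mu * t * (dot x1 lamstar - dot x1 x1) + mu * Ts * (dot x1 lamstar - dot lamstar lamstar) by ring.
      lra.
    rewrite pmulr_rge0 // => H2.
    move: H2; rewrite (_ : t * (dot x1 lamstar - dot x1 x1) + Ts * (dot x1 lamstar - dot lamstar lamstar) = (t + Ts) * dot x1 lamstar - (t * dot x1 x1 + Ts * dot lamstar lamstar)); last by ring.
    lra.
  have [c1 c2] : r <= nrm x1 /\ t * nrm x1 <= Ts * r.
    apply: (cons_real (nrm_ge0 x1) r0 t0 tTs _ (CS x1 lamstar)).
    by rewrite !nrm_sq.
  have TT : 0 <= Ts - t by rewrite subr_ge0.
  split => //.
  apply: dist_real (nrm_ge0 _) (nrm_ge0 x1) t0 tTs _ c2.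
  have DE : nrm (x1 - lamstar) ^+ 2 = dot x1 x1 - 2 * dot x1 lamstar + dot lamstar lamstar.
    by rewrite nrm_sq dotBl !dotBr (dotC lamstar x1); ring.
  have CS1 := CS x1 (x1 - lamstar).
  rewrite dotBr in CS1.
  apply: (le_trans (y := (Ts - t) * (dot x1 x1 - dot x1 lamstar))).
    rewrite DE.
    have -> : Ts * (dot x1 x1 - 2 * dot x1 lamstar + dot lamstar lamstar) =
       (Ts - t) * (dot x1 x1 - dot x1 lamstar) + (t * dot x1 x1 + Ts * dot lamstar lamstar - (t + Ts) * dot x1 lamstar) by ring.
    lra.
  by rewrite -mulrA ler_wpM2l.
set L0 := ln (nrm (lam 0%N)) - ln r.
have ind : forall k, (k < N)%N ->
  r <= nrm (lam k) /\ ln (nrm (lam k)) - ln r <= (1 - p^-1) ^+ k * L0.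
  elim => [|k IH] hk.
    by split; [rewrite -!enE | rewrite expr0 mul1r].
  have [h1 h2] := IH (ltnW hk).
  have [s1 s2 _ _] := step k (ltnW hk) h1.
  split => //.
  have rk0 : 0 < nrm (lam k) by apply: lt_le_trans h1.
  have rk1 : 0 < nrm (lam k.+1) by apply: lt_le_trans s1.
  have := s2; rewrite -ler_ln ?posrE ?mulr_gt0 ?expR_gt0 //.
  rewrite !lnM ?posrE ?expR_gt0 // expRK TsE expRK => H.
  have be : 0 <= 1 - p^-1 by lra.
  have : (1 - p^-1) * (ln (nrm (lam k)) - ln r) <= (1 - p^-1) * ((1 - p^-1) ^+ k * L0).
    by rewrite ler_wpM2l.
  rewrite exprS -mulrA.
  have -> : (1 - p^-1) * (ln (nrm (lam k)) - ln r) = (p^-1 - 1) * ln r - (p^-1 - 1) * ln (nrm (lam k)) by ring.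
  lra.
case: N Hit N1 step ind => // N' Hit _ step ind.
have [h1 h2] := ind N' (ltnSn N').
have [s1 s2 s3 s4] := step N' (ltnSn N') h1.
have rk0 : 0 < nrm (lam N') by apply: lt_le_trans h1.
have r00 : 0 < nrm (lam 0%N) by rewrite -enE; apply: lt_le_trans r0le; rewrite enE.
have L0E : ln (enorm (lam 0%N) / enorm lamstar) = L0.
  by rewrite !enE lnM ?posrE ?invr_gt0 // lnV ?posrE.
rewrite /= L0E !enE -/r.
have L00 : 0 <= L0.
  by rewrite /L0 subr_ge0 ler_ln ?posrE // -!enE.
set al := (1 - p^-1) ^+ N'.
have al0 : 0 <= al by rewrite exprn_ge0 //; lra.
have al1 : al <= 1 by rewrite exprn_ile1 //; lra.
split.
  apply: (le_trans s3); rewrite ler_pM2l // lerD2r.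
  rewrite TsE -expRN -expRD ler_expR.
  have LN0 : 0 <= ln (nrm (lam N')) - ln r by rewrite subr_ge0 ler_ln ?posrE.
  have : (1 - p^-1) * (ln (nrm (lam N')) - ln r) <= ln (nrm (lam N')) - ln r.
    by rewrite ler_piMl //; lra.
  have -> : (p^-1 - 1) * ln r + - ((p^-1 - 1) * ln (nrm (lam N'))) = (1 - p^-1) * (ln (nrm (lam N')) - ln r) by ring.
  rewrite /al; lra.
have eL : expR L0 = nrm (lam 0%N) * r^-1.
  by rewrite /L0 -lnV ?posrE // -lnM ?posrE ?invr_gt0 // lnK ?posrE ?mulr_gt0 ?invr_gt0.
have := expR_cvx L0 0 (ltac:(by rewrite al0 al1) : 0 <= al <= 1).
rewrite mulr0 addr0 expR0 mulr1 eL => H.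
have : r * (expR (al * L0) - 1) <= r * (al * (nrm (lam 0%N) * r^-1) + (1 - al) - 1).
  by rewrite ler_pM2l // lerD2r.
have -> : r * (al * (nrm (lam 0%N) * r^-1) + (1 - al) - 1) = (nrm (lam 0%N) - r) * al.
  by field; apply/eqP; lra.
by [].
Qed.
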